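(* Let $E$ be a real topological vector space, $\Omega$ a nonempty open subset of $E$, and $f_0,\dots,f_m:\Omega\to\mathbb{R}$. Let $\hat{x}$ be a solution of the problem $(\mathcal{P}_1)$: maximize $f_0(x)$ subject to $x\in\Omega$ and $f_i(x)\ge0$ for all $i\in\{1,\dots,m\}$. Assume that $f_j$ is lower semicontinuous at $\hat{x}$ for every $j\in\{1,\dots,m\}$ with $f_j(\hat{x})>0$, that each $f_i$ ($0\le i\le m$) is $D^-_M$-differentiable at $\hat{x}$, and that, after reindexing, $\{i\in\{1,\dots,m\}:f_i(\hat{x})=0\}=\{1,\dots,l\}$ with $l\ge1$. For $p\in\{0,\dots,l\}$ let $A_p=\{u\in E: D^-_Mf_i(\hat{x})(u)>0\ \text{for all } i\in\{p,\dots,l\}\}$, assume $A_l\ne\emptyset$, and let $k:=\min\{i\in\{0,\dots,l\}:A_i\neq\emptyset\}$ (so that $k\ge1$). Then for every $v\in E$ with $D^-_Mf_i(\hat{x})(v)\ge0$ for all $i\in\{k,\dots,l\}$, one has $D^-_Mf_{k-1}(\hat{x})(v)\le0$.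
   Context: $D^-f(x)(u):=\liminf_{t\to0^+}\frac{f(x+tu)-f(x)}{t}$ (with $D^-f(x)(0)=0$); $D^-_Mf(x)(u):=\inf_{w\in E}\{D^-f(x)(u+w)-D^-f(x)(w)\}$; $f$ is $D^-_M$-differentiable at $x$ if both are finite for every $u\in E$. *)

(* Defs.v *)
From HB Require Import structures.
From mathcomp Require Import all_boot all_order all_algebra.
From mathcomp Require Import all_classical all_reals all_analysis.
Set Implicit Arguments. Unset Strict Implicit. Unset Printing Implicit Defensive.
Import Order.TTheory GRing.Theory Num.Theory.
Import numFieldTopology.Exports.
Local Open Scope classical_set_scope.
Local Open Scope ring_scope.

Definition Dminus {R : realType} {E : topologicalLmodType R}
  (f : E -> R) (x u : E) : \bar R :=
  if u == 0 then 0%E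
  else limf_einf (fun t : R => ((f (x + t *: u) - f x) / t)%:E) (0^'+).

Definition DMminus {R : realType} {E : topologicalLmodType R}
  (f : E -> R) (x u : E) : \bar R :=
  ereal_inf [set (Dminus f x (u + w)%R - Dminus f x w)%E | w in [set: E]].

Definition DM_differentiable {R : realType} {E : topologicalLmodType R}
  (f : E -> R) (x : E) : Prop :=
  forall u : E, Dminus f x u \is a fin_num /\ DMminus f x u \is a fin_num.

Definition lsc_at {R : realType} {E : topologicalType} (f : E -> R) (x : E) : Prop :=
  forall e : R, 0 < e -> \forall y \near x, f x - e < f y.

Definition is_solution_P1 {R : realType} {E : topologicalLmodType R}
  (Omega : set E) (m : nat) (f : nat -> E -> R) (xh : E) : Prop :=
  Omega xh /\ (forall i, (1 <= i <= m)%N -> 0 <= f i xh) /\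
  forall x, Omega x -> (forall i, (1 <= i <= m)%N -> 0 <= f i x) -> f 0%N x <= f 0%N xh.

Definition Aset {R : realType} {E : topologicalLmodType R}
  (f : nat -> E -> R) (xh : E) (l p : nat) : set E :=
  [set u | forall i, (p <= i <= l)%N -> (0 < DMminus (f i) xh u)%E].

(* Main.v *)
Require Import Defs.
From HB Require Import structures.
From mathcomp Require Import all_boot all_order all_algebra.
From mathcomp Require Import all_classical all_reals all_analysis.
From mathcomp Require Import lra.
Import Order.TTheory GRing.Theory Num.Theory.
Import numFieldTopology.Exports.
Local Open Scope classical_set_scope.
Local Open Scope ring_scope.

Lemma near_line (R : realType) (E : topologicalLmodType R) (xh u : E) (P : E -> Prop) :
  (\forall y \near xh, P y) -> \forall t \near (0:R)^'+, P (xh + t *: u).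
Proof.
move=> HP.
have Hs : {for (0:R), continuous (fun t : R => t *: u)}.
  apply: (@continuous_comp _ _ _ (fun t : R => ((t : R^o), u)) (fun z : R^o * E => z.1 *: z.2)).
    rewrite /prop_for /continuous_at /=.
    have H0 := @cvg_pair _ _ _ (nbhs (0:R)) (nbhs (0:R^o)) (nbhs u) _ _ _ (fun t : R => (t : R^o)) (fun _ => u) (@cvg_id _ _) (cvg_cst _). exact: H0.
  exact: scale_continuous.
have Hc : {for (0:R), continuous (fun t : R => xh + t *: u)}.
  apply: (@continuous_comp _ _ _ (fun t : R => (xh, t *: u)) (fun z : E * E => z.1 + z.2)).
    rewrite /prop_for /continuous_at /=.
    have H0 := @cvg_pair _ _ _ (nbhs (0:R)) (nbhs xh) (nbhs ((0:R) *: u)) _ _ _ (fun _ => xh) (fun t : R => t *: u) (cvg_cst _) Hs. exact: H0.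
  exact: add_continuous.
have HP' : nbhs ((fun t : R => xh + t *: u) 0) P by rewrite /= scale0r addr0.
have H1 := Hc _ HP'. by apply: (@cvg_within _ (nbhs (0:R)) _ (fun t : R => 0 < t)).
Qed.

Section Helpers.
Context {R : realType} {E : topologicalLmodType R}.

Lemma DM_le_D (f : E -> R) (x u : E) : (DMminus f x u <= Dminus f x u)%E.
Proof.
rewrite /DMminus.
have -> : Dminus f x u = (Dminus f x (u + 0)%R - Dminus f x 0%R)%E.
  by rewrite addr0 /Dminus eqxx sube0.
by apply: ereal_inf_lbound; exists 0.
Qed.

Lemma D_pos_near (f : E -> R) (x u : E) : (0 < Dminus f x u)%E ->
  \forall t \near (0:R)^'+, f x < f (x + t *: u).
Proof.
rewrite /Dminus; case: eqP => [_|_]; first by rewrite ltxx.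
rewrite limf_einfE => /ereal_sup_gt [_ [V HV <-]] H0.
have Hp : \forall t \near (0:R)^'+, 0 < t by exact: nbhs_right_gt.
move: HV Hp; apply: filterS2 => t Vt tpos.
have : (0 < ((f (x + t *: u) - f x) / t)%:E)%E.
  apply: (lt_le_trans H0); apply: ereal_inf_lbound; by exists t.
rewrite lte_fin => H.
move: H; rewrite (pmulr_lgt0 _ (_ : (0:R) < t^-1)) ?invr_gt0 //.
by rewrite subr_gt0.
Qed.

Lemma near_all (F : set_system R) (FF : Filter F) (P : nat -> R -> Prop) n :
  (forall i, (i <= n)%N -> \forall t \near F, P i t) ->
  \forall t \near F, forall i, (i <= n)%N -> P i t.
Proof.
elim: n => [|n IH] H.
  by apply: filterS (H 0%N (leqnn 0)) => t Ht [|i] //.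
have H1 : \forall t \near F, forall i, (i <= n)%N -> P i t.
  by apply: IH => i Hi; apply: H; rewrite ltnW.
apply: filterS2 H1 (H n.+1 (leqnn _)) => t H1 H2 i.
by rewrite leq_eqVlt => /orP [/eqP ->|]; [|exact: H1].
Qed.

Lemma DM_superadd (f : E -> R) (x : E) :
  (forall w, Dminus f x w \is a fin_num) ->
  forall a b, (DMminus f x a + DMminus f x b <= DMminus f x (a + b)%R)%E.
Proof.
move=> Hfin a b; apply: le_ereal_inf_tmp => _ [w _ <-].
have Ha : (DMminus f x a <= Dminus f x (a + (b + w))%R - Dminus f x (b + w)%R)%E.
  by apply: ereal_inf_lbound; exists (b + w).
have Hb : (DMminus f x b <= Dminus f x (b + w)%R - Dminus f x w)%E.
  by apply: ereal_inf_lbound; exists w.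
apply: (le_trans (leeD Ha Hb)).
rewrite -(fineK (Hfin (a + (b + w)))) -(fineK (Hfin (b + w))) -(fineK (Hfin w)).
rewrite -(fineK (Hfin (a + b + w))).
by rewrite -!EFinB -EFinD lee_fin addrA subrK addrA.
Qed.

Lemma DM_iter (f : E -> R) (x : E) :
  (forall w, Dminus f x w \is a fin_num) ->
  (forall w, DMminus f x w \is a fin_num) ->
  forall v u n, fine (DMminus f x v) *+ n + fine (DMminus f x u)
                <= fine (DMminus f x (v *+ n + u)).
Proof.
move=> Hfin HM.
have Hs : forall a b, fine (DMminus f x a) + fine (DMminus f x b)
                       <= fine (DMminus f x (a + b)).
  move=> a b; rewrite -lee_fin EFinD !fineK //; exact: DM_superadd.
move=> v u; elim=> [|n IH]; first by rewrite !mulr0n !add0r.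
rewrite !mulrS -!addrA; apply: (le_trans _ (Hs _ _)).
by rewrite lerD2l.
Qed.

End Helpers.

Theorem lemma3p8 (R : realType) (E : topologicalLmodType R) (Omega : set E)
  (m l k : nat) (f : nat -> E -> R) (xh : E) :
  Omega !=set0 -> open Omega ->
  is_solution_P1 Omega m f xh ->
  (forall j, (1 <= j <= m)%N -> 0 < f j xh -> lsc_at (f j) xh) ->
  (forall i, (i <= m)%N -> DM_differentiable (f i) xh) ->
  (1 <= l <= m)%N ->
  (forall i, (1 <= i <= m)%N -> (f i xh = 0 <-> (i <= l)%N)) ->
  Aset f xh l l !=set0 ->
  (* k = min { i in {0,...,l} | A_i <> empty } *)
  (k <= l)%N -> Aset f xh l k !=set0 ->
  (forall i, (i < k)%N -> Aset f xh l i = set0) ->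
  (1 <= k)%N /\
  forall v : E, (forall i, (k <= i <= l)%N -> (0 <= DMminus (f i) xh v)%E) ->
    (DMminus (f k.-1) xh v <= 0)%E.
Proof.
move=> _ Hopen [Hxh [Hcon Hopt]] Hlsc Hdiff /andP[l1 lm] Hzero _ kl [u0 Hu0] Hsmall.
have Dfin : forall i w, (i <= m)%N -> Dminus (f i) xh w \is a fin_num.
  by move=> i w im; case: (Hdiff i im w).
have DMfin : forall i w, (i <= m)%N -> DMminus (f i) xh w \is a fin_num.
  by move=> i w im; case: (Hdiff i im w).
have k1 : (1 <= k)%N.
  rewrite lt0n; apply/negP => /eqP k0; move: Hu0; rewrite k0 => Hu0.
  have Hnear : \forall t \near (0:R)^'+, forall i, (i <= m)%N ->
     ((i <= l)%N -> f i xh < f i (xh + t *: u0)) /\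
     (~~ (i <= l)%N -> 0 < f i (xh + t *: u0)).
    apply: near_all => i im; case: (leqP i l) => il.
      have Hi : (0 < Dminus (f i) xh u0)%E.
        by apply: (lt_le_trans (Hu0 i _) (DM_le_D _ _ _)); rewrite il.
      by move: (@D_pos_near _ _ _ _ _ Hi); apply: filterS => t Ht; split.
    have i1 : (1 <= i <= m)%N by rewrite im andbT (leq_ltn_trans _ il).
    have fpos : 0 < f i xh.
      rewrite lt_neqAle Hcon // andbT; apply/eqP => H0.
      by move: il; rewrite ltnNge (proj1 (Hzero i i1) (esym H0)).
    have := Hlsc i i1 fpos _ fpos; rewrite subrr => Hl.
    move: (@near_line _ _ xh u0 _ Hl); apply: filterS => t Ht; split => [il'|_]; last exact: Ht.
    by case: il'.
  have Hom : \forall t \near (0:R)^'+, Omega (xh + t *: u0).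
    apply: near_line; move: Hopen; rewrite openE => Hopen; exact: Hopen _ Hxh.
  have [t [Ht Ho]] := filter_ex (filterI Hnear Hom).
  have Hc : forall i, (1 <= i <= m)%N -> 0 <= f i (xh + t *: u0).
    move=> i /andP[i1 im]; case: (boolP (i <= l)%N) => il.
      have := (Ht i im).1 il; rewrite (proj2 (Hzero i _) il) ?i1 ?im //.
      exact: ltW.
    exact: ltW ((Ht i im).2 il).
  have := Hopt _ Ho Hc.
  by rewrite leNgt ((Ht 0%N (leq0n m)).1 (leq0n l)).
split => // v Hv.
rewrite leNgt; apply/negP => Hpos.
have km : (k.-1 <= m)%N by rewrite (leq_trans (leq_pred k)) // (leq_trans kl).
set a := fine (DMminus (f k.-1) xh v).
set b := fine (DMminus (f k.-1) xh u0).
have a0 : 0 < a by rewrite -lte_fin /a fineK // DMfin.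
set n := (Num.trunc (`|b| / a)).+1.
have Hn : 0 < a *+ n + b.
  have := truncnS_gt (`|b| / a); rewrite -/n ltr_pdivrMr // => H. rewrite -mulr_natl.
  have := ler_norm (- b); rewrite normrN; lra.
set w := v *+ n + u0.
have : Aset f xh l k.-1 w.
  move=> i /andP[i1 il]; case: (ltnP i k) => ik.
    have -> : i = k.-1.
      by apply/eqP; rewrite eqn_leq i1 andbT -ltnS prednK.
    rewrite -(fineK (DMfin _ w km)) lte_fin.
    exact: (lt_le_trans Hn (@DM_iter _ _ _ _ (Dfin _ ^~ km) (DMfin _ ^~ km) _ _ _)).
  have im : (i <= m)%N by rewrite (leq_trans il).
  rewrite -(fineK (DMfin _ w im)) lte_fin.
  apply: (lt_le_trans _ (@DM_iter _ _ _ _ (Dfin _ ^~ im) (DMfin _ ^~ im) _ _ _)).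
  have h1 : 0 <= fine (DMminus (f i) xh v).
    by rewrite -lee_fin fineK ?DMfin // Hv // ik.
  have h2 : 0 < fine (DMminus (f i) xh u0).
    by rewrite -lte_fin fineK ?DMfin // Hu0 // ik.
  by apply: ltr_wpDl => //; rewrite mulrn_wge0.
by rewrite Hsmall ?prednK.
Qed.
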